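(* Let $b\ge 2$ be even and $n\ge 2$. Then $$g(SC^{+}(b,n)) = b + \frac{b^{2n}(b-1) + b^{n}(bn-n-1)}{2}.$$
   Context: For an even integer $b\ge2$ and $n\ge0$, $SC^{+}(b,n)=\langle\{b^{n+i}+1: i\in\mathbb{N}\}\rangle$ (submonoid of $(\mathbb{N},+)$ generated by these numbers, a numerical semigroup). The genus $g(S)$ is the cardinality of $\mathbb{N}\setminus S$. *)

(* Defs.v *)
From mathcomp Require Import all_boot.
Set Implicit Arguments. Unset Strict Implicit. Unset Printing Implicit Defensive.

(* Membership in SC^+(b,n) = < { b^(n+i) + 1 : i in N } >, the submonoid of
   (N,+) generated by these numbers: x is a finite sum (possibly empty) of
   generators, the list l recording the indices i used (with repetition). *)
Definition inSCplus (b n x : nat) : Prop :=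
  exists l : seq nat, x = \sum_(i <- l) (b ^ (n + i) + 1).

Definition genus_SCplus (b n g : nat) : Prop :=
  exists s : seq nat, [/\ uniq s, (forall x, x \in s <-> ~ inSCplus b n x) & size s = g].

(* Main.v *)
Require Import Defs.
From mathcomp Require Import all_boot.
From mathcomp Require Import zify.

Definition Tr (b R x : nat) := \sum_(0 <= k < R) x %/ b ^ k.+1.
Definition T (b x : nat) := Tr b x x.

Lemma Tr_T b R x : 1 < b -> x <= R -> Tr b R x = T b x.
Proof.
move=> hb hxR; rewrite /T /Tr (@big_cat_nat _ _ _ x 0 R) //=.
rewrite [X in _ + X]big_nat_cond [X in _ + X]big1 ?addn0 // => k.
rewrite andbT => /andP[hk _].
apply: divn_small; apply: (leq_trans _ (ltn_expl k.+1 hb)); lia.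
Qed.

Lemma T_rec b N : 1 < b -> T b N = N %/ b + T b (N %/ b).
Proof.
move=> hb; rewrite -(Tr_T b N.+1 N hb (leqnSn N)) -(Tr_T b N (N %/ b) hb (leq_div N b)).
rewrite /Tr big_nat_recl //= expn1; congr (_ + _).
by apply: eq_bigr => k _; rewrite expnS divnMA.
Qed.

Lemma T_super b a c : 1 < b -> T b a + T b c <= T b (a + c).
Proof.
move=> hb; rewrite -(Tr_T b (a + c) a hb (leq_addr c a)) -(Tr_T b (a + c) c hb (leq_addl a c)).
rewrite /T /Tr -big_split /=; apply: leq_sum => k _.
by rewrite divnD ?expn_gt0 ?(ltnW hb) // leq_addr.
Qed.

Lemma T_mono b a c : 1 < b -> a <= c -> T b a <= T b c.
Proof.
move=> hb hac; rewrite -(subnKC hac); apply: leq_trans (T_super b a (c - a) hb).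
exact: leq_addr.
Qed.

Lemma T_ge b N : 1 < b -> N %/ b <= T b N.
Proof. by move=> hb; rewrite (T_rec b N hb) leq_addr. Qed.

Lemma T_small b N : 1 < b -> N < b -> T b N = 0.
Proof.
move=> hb hN; rewrite /T /Tr big_nat_cond big1 // => k /andP[/andP[_ hk] _].
apply: divn_small; apply: (leq_trans hN); rewrite -{1}(expn1 b).
exact: leq_pexp2l (ltnW hb) _.
Qed.

Lemma T_pow b e : 1 < b -> b.-1 * T b (b ^ e) + 1 = b ^ e.
Proof.
move=> hb; elim: e => [|e IH].
  by rewrite expn0 T_small // muln0.
rewrite T_rec // expnS mulKn ?(ltnW hb) // mulnDr -addnA IH.
by rewrite addnC -mulSn prednK // ltnW.
Qed.

Definition sumP (b : nat) (l : seq nat) := \sum_(e <- l) b ^ e.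

Lemma rep_T b l : 1 < b ->
  exists2 t, t <= T b (sumP b l) & sumP b l = size l + b.-1 * t.
Proof.
move=> hb; elim: l => [|e l [t ht IH]].
  by exists 0; rewrite /sumP big_nil ?muln0.
exists (T b (b ^ e) + t).
  rewrite /sumP big_cons; apply: leq_trans (T_super b _ _ hb).
  by rewrite leq_add2l.
rewrite /sumP big_cons -/(sumP b l) IH /= mulnDr; have := T_pow b e hb; lia.
Qed.

Lemma rep_min b N : 1 < b ->
  exists l, sumP b l = N /\ size l + b.-1 * T b N = N.
Proof.
move=> hb; have [K] := ubnP N; elim: K N => // K IH N hN.
case: (posnP N) => [->|N0].
  by exists [::]; rewrite /sumP big_nil /T /Tr big_geq // muln0.
have hNb : N %/ b < K.
  rewrite -ltnS; apply: leq_trans hN; rewrite ltnS ltn_divLR ?(ltnW hb) //.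
  by rewrite -{1}(muln1 N) ltn_mul2l N0.
have [l1 [h1 h2]] := IH (N %/ b) hNb.
exists (nseq (N %% b) 0 ++ map S l1); split.
  rewrite /sumP big_cat big_nseq big_map iter_addn_0 expn0 mul1n.
  under eq_bigr do rewrite expnS.
  rewrite -big_distrr -/(sumP b l1) h1; change (N %% b + b * (N %/ b) = N).
  by rewrite addnC mulnC -divn_eq.
rewrite size_cat size_nseq size_map T_rec // mulnDr.
have e0 := divn_eq N b.
have e1 : N %/ b * b = b.-1 * (N %/ b) + N %/ b.
  by rewrite [b.-1 * _]mulnC -mulnSr prednK // ltnW.
lia.
Qed.

Lemma sumP_ge b l : 0 < b -> size l <= sumP b l.
Proof.
move=> hb; elim: l => [|e l IH]; first by rewrite /sumP big_nil.
by rewrite /sumP big_cons /= -/(sumP b l) -add1n leq_add // expn_gt0 hb.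
Qed.

Lemma rep_split b l : 1 < b -> size l < sumP b l ->
  exists l', sumP b l' = sumP b l /\ size l' = size l + b.-1.
Proof.
move=> hb hs.
case: (boolP (has (fun e => 0 < e) l)) => [|/hasPn H]; last first.
  move: hs; rewrite /sumP big_seq (eq_bigr (fun _ => 1)) -?big_seq ?sum1_size ?ltnn //.
  by move=> e /H; rewrite lt0n negbK => /eqP ->.
case/hasP => e he e0.
exists (nseq b e.-1 ++ rem e l); split.
  rewrite /sumP big_cat big_nseq iter_addn_0 (perm_big _ (perm_to_rem he)) big_cons.
  by rewrite -/(sumP b (rem e l)) mulnC -expnS prednK.
rewrite size_cat size_nseq size_rem //.
have : 0 < size l by case: l he {hs}.
by rewrite -!subn1 => hl; rewrite addnBA // addnBA ?(ltnW hb) // addnC.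
Qed.

Lemma rep_all b N t : 1 < b -> t <= T b N ->
  exists l, sumP b l = N /\ size l + b.-1 * t = N.
Proof.
move=> hb ht; have [r hr] : exists r, T b N = t + r by exists (T b N - t); rewrite subnKC.
elim: r t hr {ht} => [|r IH] t hr.
  by rewrite addn0 in hr; rewrite -hr; exact: rep_min.
have [l [h1 h2]] : exists l, sumP b l = N /\ size l + b.-1 * t.+1 = N.
  by apply: IH; rewrite addSnnS.
have hd : 0 < b.-1 by rewrite -ltnS prednK // ltnW.
have hs : size l < sumP b l by rewrite h1 -h2 mulnS; lia.
have [l' [h1' h2']] := rep_split b l hb hs.
exists l'; split; first by rewrite h1' h1.
rewrite h2' -h2 mulnS; lia.
Qed.

Definition inS2 b n x := exists N t, t <= T b N /\ x + b.-1 * t = (b ^ n).+1 * N.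

Lemma sum_gen b n l : \sum_(i <- l) (b ^ (n + i) + 1) = b ^ n * sumP b l + size l.
Proof.
rewrite big_split /= sum1_size big_distrr /=; congr (_ + _).
by apply: eq_bigr => i _; rewrite expnD.
Qed.

Lemma inS_iff b n x : 1 < b -> inSCplus b n x <-> inS2 b n x.
Proof.
move=> hb; split.
  case=> l ->; rewrite sum_gen.
  have [t ht e] := rep_T b l hb.
  exists (sumP b l), t; split => //.
  rewrite mulSn {3}e; lia.
case=> N [t [ht e]].
have [l [h1 h2]] := rep_all b N t hb ht.
exists l; rewrite sum_gen h1.
move: e; rewrite mulSn -{2}h2; lia.
Qed.

Lemma sum_lt R K : \sum_(0 <= k < R) (k < K) = minn R K.
Proof.
elim: R => [|R IH]; first by rewrite big_geq // min0n.
rewrite big_nat_recr //= IH; case: ltnP => h; lia.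
Qed.

Lemma T_addK b a c K : 1 < b -> a + c < b ^ K.+1 ->
  T b (a + c) <= T b a + T b c + K.
Proof.
move=> hb hK.
rewrite -(Tr_T b (a + c) a hb (leq_addr c a)) -(Tr_T b (a + c) c hb (leq_addl a c)).
rewrite /T /Tr -big_split /=.
have H : \sum_(0 <= k < a + c) ((a + c) %/ b ^ k.+1) <=
   \sum_(0 <= k < a + c) (a %/ b ^ k.+1 + c %/ b ^ k.+1) + \sum_(0 <= k < a + c) (k < K).
  rewrite -big_split /=; apply: leq_sum => k _; case: (ltnP k K) => hk.
    by rewrite divnD ?expn_gt0 ?(ltnW hb) // leq_add2l leq_b1.
  rewrite divn_small //; apply: leq_trans hK _; apply: leq_pexp2l; [exact: ltnW | by rewrite ltnS].
apply: leq_trans H _; by rewrite leq_add2l sum_lt geq_minr.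
Qed.

Lemma T_le b x : 1 < b -> b.-1 * T b x <= x.
Proof. by move=> hb; have [l [_ e]] := rep_min b x hb; rewrite -{2}e leq_addl. Qed.

Lemma T_shift b n N j : 1 < b -> 0 < n -> N < b * (b ^ n).+1 ->
  T b (N + b.-1 * j) <= T b N + j * (b ^ n).+1.
Proof.
move=> hb hn hN; case: (posnP j) => [->|j0]; first by rewrite muln0 addn0 leq_addr.
have hd : 0 < b.-1 by rewrite -ltnS prednK // ltnW.
have hTj : T b (b.-1 * j) <= j.
  by rewrite -(leq_pmul2l hd); apply: T_le.
have hK : N + b.-1 * j < b ^ (n + j).+1.
  have e1 : b ^ (n + j).+1 = b ^ n.+1 * b ^ j by rewrite -addSn expnD.
  have e2 : j < b ^ j := ltn_expl j hb.
  have e3 : b * b <= b ^ n.+1.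
    by rewrite mulnn; apply: leq_pexp2l; [exact: ltnW | ].
  have e4 : b * (b ^ n).+1 = b ^ n.+1 + b by rewrite mulnS expnS addnC.
  rewrite e1; rewrite e4 in hN.
  have e5 : b ^ n.+1 * j.+1 <= b ^ n.+1 * b ^ j by rewrite leq_mul2l e2 orbT.
  have e6 : b * b * j <= b ^ n.+1 * j by rewrite leq_mul2r e3 orbT.
  rewrite -subn1 in hd |- *; nia.
have h1 := T_addK b N (b.-1 * j) (n + j) hb hK.
have h2 : n < b ^ n := ltn_expl n hb.
have h3 : j * n.+1 <= j * b ^ n by rewrite leq_mul2l h2 orbT.
apply: leq_trans h1 _; nia.
Qed.

Lemma coprime_dm b n : 1 < b -> ~~ odd b -> coprime b.-1 (b ^ n).+1.
Proof.
move=> hb ev.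
have hbd : b %% b.-1 = 1 %% b.-1.
  by rewrite -{1}(prednK (ltnW hb)) -addn1 modnDl.
rewrite -coprime_modr -addn1 -modnDml -modnXm hbd modnXm exp1n modnDml addn1.
rewrite coprime_modr coprimen2.
by move: ev; rewrite -{1}(prednK (ltnW hb)) /=; case: (odd _).
Qed.

Lemma cancel_mod m d a c : coprime m d -> a < m -> c < m ->
  d * a = d * c %[mod m] -> a = c.
Proof.
move=> co.
wlog hac : a c / a <= c.
  move=> H ha hc e; case: (leqP a c) => h; first exact: H.
  by symmetry; apply: H => //; first exact: ltnW.
move=> ha hc /eqP e.
have : m %| d * c - d * a by rewrite -eqn_mod_dvd ?leq_mul2l ?hac ?orbT // eq_sym.
rewrite -mulnBr Gauss_dvdr //.
case: (posnP (c - a)) => [h0|hp] hd; first lia.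
have := dvdn_leq hp hd; lia.
Qed.

Lemma gap_iff b n x : 1 < b -> ~~ odd b -> 0 < n ->
  ~ inS2 b n x <-> exists N i, [/\ N < b * (b ^ n).+1, i < (b ^ n).+1,
      T b N < i, b.-1 * i <= (b ^ n).+1 * N & x = (b ^ n).+1 * N - b.-1 * i].
Proof.
move=> hb ev hn.
set m := (b ^ n).+1; set d := b.-1.
have co : coprime m d by rewrite coprime_sym coprime_dm.
have m0 : 0 < m by [].
have hd : 0 < d by rewrite /d -ltnS prednK // ltnW.
split.
  move=> H.
  have [a _ ha] := Bezoutl d m0.
  rewrite (eqP co) in ha.
  set i := (x * a) %% m.
  have hdiv : m %| x + d * i.
    rewrite /dvdn -modnDmr modnMmr modnDmr -/(dvdn m _).
    have -> : x + d * (x * a) = x * (1 + a * d) by nia.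
    exact: dvdn_mull.
  set N := (x + d * i) %/ m.
  have eN : m * N = x + d * i by rewrite /N mulnC divnK.
  have hi : i < m by rewrite /i ltn_mod.
  have hTN : T b N < i.
    rewrite ltnNge; apply/negP => hle; apply: H; exists N, i; split => //.
  exists N, i; split => //.
  - have : N %/ b < m by apply: leq_ltn_trans (T_ge b N hb) (ltn_trans hTN hi).
    by rewrite ltn_divLR ?(ltnW hb) // mulnC.
  - by rewrite eN leq_addl.
  - by rewrite eN addnK.
case=> N [i [hN hi hTi hdi ->]] [N' [t [ht e]]].
have e2 : m * N + d * t = m * N' + d * i by rewrite -e; lia.
have hmod : d * (t %% m) = d * i %[mod m].
  rewrite modnMmr.
  have := congr1 (modn^~ m) e2.
  by rewrite [m * N]mulnC [m * N']mulnC !modnMDl.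
have hti : t %% m = i by apply: cancel_mod co (ltn_mod _ _) hi hmod.
set j := t %/ m.
have et : t = j * m + i by rewrite -hti /j -divn_eq.
have eN' : N' = N + d * j.
  apply/eqP; rewrite -(eqn_pmul2l m0); apply/eqP.
  move: e2; rewrite et; nia.
have := T_shift b n N j hb hn hN.
rewrite -eN'; lia.
Qed.

Lemma sum_block (F : nat -> nat) k c :
  \sum_(0 <= N < k * c) F N = \sum_(0 <= a < k) \sum_(0 <= r < c) F (a * c + r).
Proof.
elim: k => [|k IH]; first by rewrite mul0n !big_geq.
rewrite big_nat_recr //= -IH mulSn addnC (@big_cat_nat _ _ _ (k * c)) ?leq_addr //=.
congr (_ + _).
rewrite -{1}(add0n (k * c)) big_addn addKn.
by apply: eq_bigr => r _; rewrite addnC.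
Qed.

Lemma sum_id k : 2 * \sum_(0 <= a < k) a + k = k * k.
Proof.
elim: k => [|k IH]; first by rewrite big_geq.
rewrite big_nat_recr //= mulnDr; nia.
Qed.

Lemma count_int u v k :
  count (fun i => (u < i) && (i <= v)) (iota 0 k.+1) = minn v k - u.
Proof.
elim: k => [|k IH]; first by rewrite /= addn0; case: ltnP; case: ltnP => //; lia.
rewrite -[k.+2]addn1 iotaD count_cat IH /= addn0 add0n.
case: (ltnP u k.+1) => h1; case: (leqP k.+1 v) => h2 /=; lia.
Qed.

Lemma T_split b n a M : 1 < b -> a < b -> M < b ^ n ->
  T b (a * b ^ n + M) = a * T b (b ^ n) + T b M.
Proof.
move=> hb ha; elim: n M => [|n IH] M hM.
  move: hM; rewrite expn0 ltnS leqn0 => /eqP ->.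
  by rewrite addn0 muln1 !T_small ?(ltnW hb) ?muln0.
rewrite T_rec // (T_rec b (b ^ n.+1)) // (T_rec b M) //.
have hM' : M %/ b < b ^ n by rewrite ltn_divLR ?(ltnW hb) // -expnSr.
rewrite expnS mulnCA mulnC -[X in (X * b + M)]mulnC divnMDl ?(ltnW hb) //.
rewrite (mulnC b) mulnK ?(ltnW hb) // [b ^ n * a]mulnC IH //; lia.
Qed.

Lemma sumT b n : 1 < b ->
  2 * b.-1 * \sum_(0 <= M < b ^ n) T b M + n * b.-1 * b ^ n + b ^ n = b ^ n * b ^ n.
Proof.
move=> hb; elim: n => [|n IH].
  by rewrite expn0 big_nat1 T_small // ?muln0 ?(ltnW hb).
rewrite expnSr sum_block.
have e : forall a, \sum_(0 <= r < b) T b (a * b + r) = b * (a + T b a).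
  move=> a; rewrite (@eq_big_nat _ _ _ 0 b _ (fun _ => a + T b a)); first by rewrite sum_nat_const_nat subn0.
  move=> r /andP[_ hr].
  by rewrite T_rec // divnMDl ?(ltnW hb) // divn_small // addn0.
rewrite (eq_bigr _ (fun a _ => e a)) -big_distrr big_split /=.
have hS := sum_id (b ^ n).
set S := \sum_(0 <= a < b ^ n) a in hS *.
set A := \sum_(0 <= a < b ^ n) T b a in IH *.
set B := b ^ n in IH hS *.
have hbd : b = b.-1.+1 by rewrite prednK // ltnW.
set d := b.-1 in hbd IH *.
rewrite hbd; nia.
Qed.

Lemma countN b n N : 1 < b ->
  count (fun i => (T b N < i) && (b.-1 * i <= (b ^ n).+1 * N)) (iota 0 (b ^ n).+1)
  = minn ((b ^ n).+1 * N %/ b.-1) (b ^ n) - T b N.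
Proof.
move=> hb; have hd : 0 < b.-1 by rewrite -ltnS prednK // ltnW.
rewrite -count_int; apply: eq_count => i /=.
by rewrite leq_divRL // mulnC.
Qed.

Lemma sum_half e : \sum_(0 <= N < e.*2.+1) (N.*2 %/ e.*2.+1) = e.
Proof.
rewrite (@big_cat_nat _ _ _ e.+1) //= ?ltnS ?leq_double ?leq_addr //; last by rewrite -addnn leq_addl.
rewrite big_nat_cond big1 ?add0n; last first.
  move=> N /andP[/andP[_ h] _]; apply: divn_small; rewrite ltnS -addnn; lia.
rewrite (@eq_big_nat _ _ _ e.+1 e.*2.+1 _ (fun _ => 1)).
  by rewrite sum_nat_const_nat muln1 -addnn; lia.
move=> N /andP[h1 h2]; apply/eqP; rewrite eqn_leq leq_divRL // mul1n.
rewrite -ltnS ltn_divLR //; apply/andP; split; lia.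
Qed.


Lemma total_sum b n : 1 < b -> ~~ odd b -> 0 < n ->
  2 * \sum_(0 <= N < b * (b ^ n).+1) (minn ((b ^ n).+1 * N %/ b.-1) (b ^ n) - T b N)
  = 2 * b + b.-1 * (b ^ n) * (b ^ n) + (b.-1 * n).-1 * b ^ n.
Proof.
move=> hb ev hn.
have hd : 0 < b.-1 by rewrite -ltnS prednK // ltnW.
have hbd : b = b.-1.+1 by rewrite prednK // ltnW.
have hq := T_pow b n hb.
have hA := sumT b n hb.
set B := b ^ n in hq hA *.
set q := T b B in hq *.
set A := \sum_(0 <= M < B) T b M in hA.
set d := b.-1 in hd hbd hq hA *.
have hBb : b <= B by rewrite /B -{1}(expn1 b) leq_pexp2l // ltnW.
have hdbm : d <= b * B.+1 by rewrite hbd; nia.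
rewrite (@big_cat_nat _ _ _ d) //=.
have PA : \sum_(0 <= N < d) (minn (B.+1 * N %/ d) B - T b N)
          = \sum_(0 <= N < d) (q * N + N.*2 %/ d).
  apply: eq_big_nat => N /andP[_ hN].
  rewrite (T_small b N hb) ?subn0; last by rewrite hbd ltnS ltnW.
  have e1 : B.+1 * N = q * N * d + N.*2 by rewrite -hq -addnn; nia.
  rewrite e1 divnMDl //; apply/minn_idPl.
  have : N.*2 %/ d < 2 by rewrite ltn_divLR // -muln2 mulnC ltn_mul2l.
  nia.
rewrite PA big_split /= -big_distrr /=.
have hodd : odd d by move: ev; rewrite hbd /=; case: (odd d).
have hde : d = (d./2).*2.+1 by rewrite -{1}(odd_double_half d) hodd add1n.
have hS := sum_id d.
rewrite [X in \sum_(0 <= N < X) (N.*2 %/ X)]hde sum_half.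
have PC1 : \sum_(d <= i < b * B.+1) (minn ((B.+1 * i) %/ d) B - T b i)
         = \sum_(d <= i < b * B.+1) (B - T b i).
  apply: eq_big_nat => i /andP[hi _]; congr (_ - _); apply/minn_idPr.
  rewrite leq_divRL //; exact: leq_mul (leqnSn B) hi.
have PC2 : \sum_(0 <= i < b * B.+1) (B - T b i) = d * B + \sum_(d <= i < b * B.+1) (B - T b i).
  rewrite (@big_cat_nat _ _ _ d) //=; congr (_ + _).
  rewrite (@eq_big_nat _ _ _ 0 d _ (fun _ => B)) ?sum_nat_const_nat ?subn0 //.
  move=> i /andP[_ hi]; rewrite T_small ?subn0 //; by rewrite hbd ltnS ltnW.
have PC3 : \sum_(0 <= i < b * B.+1) (B - T b i) = \sum_(0 <= i < b * B) (B - T b i).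
  rewrite (@big_cat_nat _ _ _ (b * B)) ?leq_mul2l ?leqnSn ?orbT //=.
  rewrite [X in _ + X]big_nat_cond [X in _ + X]big1 ?addn0 // => i /andP[/andP[hi _] _].
  apply/eqP; rewrite subn_eq0; apply: leq_trans (T_mono b _ _ hb hi).
  apply: leq_trans (T_ge b _ hb); by rewrite mulKn // ltnW.
have PC4 : \sum_(0 <= i < b * B) (B - T b i)
         = \sum_(0 <= a < b) \sum_(0 <= M < B) (B - (a * q + T b M)).
  rewrite sum_block; apply: eq_big_nat => a /andP[_ ha].
  apply: eq_big_nat => M /andP[_ hM]; by rewrite T_split.
have PC5 : \sum_(0 <= M < B) (B - (d * q + T b M)) = b.
  rewrite (@big_cat_nat _ _ _ b) //= (@eq_big_nat _ _ _ 0 b _ (fun _ => 1)).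
    rewrite sum_nat_const_nat subn0 muln1 big_nat_cond big1 ?addn0 // => M /andP[/andP[hM _] _].
    have : 0 < T b M by apply: leq_trans (T_ge b M hb); rewrite divn_gt0 // ltnW.
    lia.
  move=> M /andP[_ hM]; rewrite T_small //; lia.
have HY : \sum_(0 <= a < d) \sum_(0 <= M < B) (B - (a * q + T b M))
          + (q * B * \sum_(0 <= a < d) a + d * A) = d * B * B.
  have -> : q * B * \sum_(0 <= a < d) a + d * A
          = \sum_(0 <= a < d) \sum_(0 <= M < B) (a * q + T b M).
    have -> : \sum_(0 <= a < d) \sum_(0 <= M < B) (a * q + T b M)
             = \sum_(0 <= a < d) (q * B * a + A).
      apply: eq_bigr => a _; rewrite big_split /= sum_nat_const_nat subn0.
      by rewrite mulnCA mulnC [B * q]mulnC.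
    rewrite big_split /= sum_nat_const_nat subn0 big_distrr /= mulnC; reflexivity.
  rewrite -big_split /= (@eq_big_nat _ _ _ 0 d _ (fun _ => d * B * B %/ d)).
    by rewrite sum_nat_const_nat subn0 -!mulnA mulKn.
  move=> a /andP[_ ha]; rewrite -big_split /=.
  rewrite (@eq_big_nat _ _ _ 0 B _ (fun _ => B)).
    by rewrite sum_nat_const_nat subn0 -!mulnA mulKn.
  move=> M /andP[_ hM]; rewrite subnK //.
  have h0 : T b M <= q by apply: T_mono => //; exact: ltnW.
  have h1 : a.+1 * q <= d * q := leq_mul ha (leqnn q).
  rewrite mulSn in h1; lia.
rewrite PC1.
have HC : d * B + \sum_(d <= i < b * B.+1) (B - T b i)
   = \sum_(0 <= a < d) \sum_(0 <= M < B) (B - (a * q + T b M)) + b.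
  by rewrite -PC2 PC3 PC4 hbd big_nat_recr //= -hbd PC5.
move: HC HY hS hq hA hde.
set C := \sum_(d <= i < b * B.+1) (B - T b i).
set Y := \sum_(0 <= a < d) \sum_(0 <= M < B) (B - (a * q + T b M)).
set S := \sum_(0 <= a < d) a.
set e := d./2.
clearbody C Y S e A q B d.
move=> HC HY hS hq hA hde.
clear -HC HY hS hq hA hde hbd hn.
subst b B d.
rewrite -subn1.
have hn1 : 1 <= e.*2.+1 * n by rewrite muln_gt0.
nia.
Qed.


Lemma count_allp (P : pred (nat * nat)) (s t : seq nat) :
  count P [seq (x, y) | x <- s, y <- t] = \sum_(x <- s) count (fun y => P (x, y)) t.
Proof.
elim: s => [|x s IH]; first by rewrite big_nil.
by rewrite allpairs_cons count_cat IH big_cons count_map.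
Qed.

Theorem mainTheorem18 (b n : nat) :
  2 <= b -> ~~ odd b -> 2 <= n ->
  genus_SCplus b n
    (b + (b ^ (2 * n) * (b - 1) + b ^ n * (b * n - n - 1)) %/ 2).
Proof.
move=> hb ev hn2.
have hn : 0 < n by apply: leq_trans hn2.
set m := (b ^ n).+1; set d := b.-1.
have co : coprime m d by rewrite coprime_sym coprime_dm.
have m0 : 0 < m by [].
pose P := fun p : nat * nat => (T b p.1 < p.2) && (d * p.2 <= m * p.1).
pose L := [seq (N, i) | N <- iota 0 (b * m), i <- iota 0 m].
exists [seq m * p.1 - d * p.2 | p <- L & P p]; split.
- rewrite map_inj_in_uniq; first by apply: filter_uniq; apply: allpairs_uniq;
    rewrite ?iota_uniq // => [[? ?] [? ?]] _ _.
  case=> N i [N' i']; rewrite !mem_filter /P /L.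
  move=> /andP[/andP[_ h1] hL] /andP[/andP[_ h2] hL'] /= e.
  case/allpairsP: hL => [[x y] [_ hy /= [ex ey]]].
  case/allpairsP: hL' => [[x' y'] [_ hy' /= [ex' ey']]].
  subst N i N' i'.
  rewrite mem_iota in hy; rewrite mem_iota in hy'.
  move: h1 h2 hy hy' => /= h1 h2 hy hy'.
  have e2 : m * x + d * y' = m * x' + d * y by lia.
  have hmod : d * y' = d * y %[mod m].
    have := congr1 (modn^~ m) e2.
    by rewrite [m * x]mulnC [m * x']mulnC !modnMDl.
  have hyy : y' = y by apply: cancel_mod co _ _ hmod; lia.
  subst y'; have : m * x = m * x' by lia.
  by move/eqP; rewrite eqn_pmul2l // => /eqP ->.
- move=> x; rewrite inS_iff // gap_iff //; split.
    case/mapP => [[N i]]; rewrite mem_filter /P /L => /andP[/andP[h1 h2]].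
    case/allpairsP => [[x' y'] [hx hy [ex ey]]] ->.
    move: ex ey => /= ex ey; subst x' y'.
    rewrite mem_iota in hx; rewrite mem_iota in hy.
    move: hx hy h1 h2 => /= hx hy h1 h2.
    exists N, i; split; [lia | lia | exact: h1 | exact: h2 | by []].
  case=> N [i [hN hi h1 h2 ->]]; apply/mapP; exists (N, i) => //.
  rewrite mem_filter; apply/andP; split; first by rewrite /P /= h1 h2.
  rewrite /L; apply: (@allpairs_f _ _ _ (fun a c => (a, c))); by rewrite mem_iota.
rewrite size_map size_filter count_allp.
have hG := total_sum b n hb ev hn.
rewrite /index_iota subn0 in hG.
rewrite (eq_bigr (fun N => minn ((b ^ n).+1 * N %/ b.-1) (b ^ n) - T b N)); last first.
  by move=> N _; rewrite -(countN b n N hb).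
set G := \sum_(i <- iota 0 (b * (b ^ n).+1)) _ in hG *.
have e1 : b ^ (2 * n) = b ^ n * b ^ n by rewrite mul2n -addnn expnD.
have e2 : b * n - n - 1 = (b.-1 * n).-1.
  by rewrite -[b.-1]subn1 mulnBl mul1n subn1.
rewrite e1 e2 subn1 -/d.
rewrite -/d in hG.
have -> : b ^ n * b ^ n * d + b ^ n * (d * n).-1 = 2 * (G - b).
  rewrite mulnBr hG; move: (b ^ n) ((d * n).-1) => X Y; nia.
rewrite mulKn //; move: hG; move: (b ^ n) ((d * n).-1) => X Y; nia.
Qed.
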